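(* The push-based remote control problem described in the context is equivalent to the single-agent POMDP $\hat{\mathcal{M}}$ described in the context: (after the encoder's decision at time $0$) deterministic pairs of encoder and decoder policies correspond to deterministic policies of $\hat{\mathcal{M}}$ with equal expected discounted objective, so that the optimal push-based policies are obtained from the optimal policy of $\hat{\mathcal{M}}$, $\hat{\boldsymbol{\pi}}^*_{\text{joint}}=\arg\max_{\hat{\boldsymbol{\pi}}:\Omega\to\hat{\mathcal{A}}}\sum_{t=0}^\infty\gamma^t\,\mathbb{E}_{\boldsymbol{\omega}_0,\hat{\boldsymbol{\pi}}}\big[\hat r(s_t,\hat{\boldsymbol{\pi}}(\boldsymbol{\omega}_t))\big]$, by splitting each chosen action $\langle a,\mathbf{c}\rangle$ into the decoder's control action $a$ and the encoder's communication decisions $\mathbf{c}$.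
   Context: Push-based problem: finite state set $\mathcal{S}$, finite control action set $\mathcal{A}$, stochastic matrices $\mathbf{P}^a$ ($a\in\mathcal{A}$) with $P^a_{s,s'}$ the probability of moving from $s$ to $s'$ under $a$, reward $r(s,a,s')$, discount $\gamma\in[0,1)$, communication cost $\beta>0$. A Markov process evolves as $s_{t+1}\sim P^{a_t}_{s_t,\cdot}$. At each time $t$ an encoder, observing $s_t$ and the past decoder observations, chooses $c_t\in\{0,1\}$; the decoder observes $o_t=s_t$ if $c_t=1$ and $o_t=\chi$ otherwise, then chooses $a_t\in\mathcal{A}$ based on $o_{0:t}$ (and its past actions). The objective is to maximize $\mathbb{E}\big[\sum_t\gamma^t(r(s_t,a_t,s_{t+1})-\beta c_t)\big]$ over deterministic encoder and decoder policies; the encoder's decision at time $0$ is optimized separately. POMDP $\hat{\mathcal{M}}$: hidden state space $\mathcal{S}$; observation space $\mathcal{S}\cup\{\chi\}$; action space $\hat{\mathcal{A}}=\mathcal{A}\times\{0,1\}^{|\mathcal{S}|}$, where an action $\langle a,\mathbf{c}\rangle$ consists of a decoder control action $a$ and an encoder communication decision $\mathbf{c}_{s}\in\{0,1\}$ for every possible next state $s$; transition $\Pr(s_{t+1}=s'\mid s_t=s,\langle a,\mathbf{c}\rangle)=P^a_{s,s'}$; after moving to $s'$ the observation is $s'$ if $\mathbf{c}_{s'}=1$ and $\chi$ if $\mathbf{c}_{s'}=0$; reward $\hat r(s,\langle a,\mathbf{c}\rangle)=\sum_{s'\in\mathcal{S}}P^a_{s,s'}\big(r(s,a,s')-\gamma\beta\,\mathbf{c}_{s'}\big)$.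 $\Omega$ is the probability simplex over $\mathcal{S}$ (beliefs), $\boldsymbol{\omega}_t$ is the belief at time $t$ and $\boldsymbol{\omega}_0$ the decoder's initial belief. *)

(* Defs.v *)
From HB Require Import structures.
From mathcomp Require Import all_boot all_order all_algebra.
From mathcomp Require Import all_classical all_reals all_analysis.
Set Implicit Arguments. Unset Strict Implicit. Unset Printing Implicit Defensive.
Import Order.TTheory GRing.Theory Num.Theory.
Import numFieldNormedType.Exports.
Local Open Scope ring_scope.

Section PushPOMDP.
Variables (R : realType) (S A : finType).
(* P a s s' = P^a_{s,s'} ; r s a s' = r(s,a,s') ; mu0 = law of s_0 *)
Variables (P : A -> S -> S -> R) (r : S -> A -> S -> R) (gamma beta : R).
Variable (mu0 : S -> R).
(* encoder decision at time 0 (fixed, optimized separately) *)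
Variable (c0 : S -> bool).

(* observation: Some s = the state s, None = the empty symbol chi *)
Definition observe (c : bool) (s : S) : option S := if c then Some s else None.

(* Expectation at time t of a functional f(s_t, o_{0:t-1}) of the state and
   the past decoder observations, for deterministic encoder/decoder policies:
   enc (o_{0:t-1}) s_t = c_t for t >= 1, dec (o_{0:t}) = a_t. *)
Section Push.
Variables (enc : seq (option S) -> S -> bool) (dec : seq (option S) -> A).

Definition push_c (hp : seq (option S)) (s : S) : bool :=
  if hp is [::] then c0 s else enc hp s.

Definition push_obs (hp : seq (option S)) (s : S) : seq (option S) :=
  rcons hp (observe (push_c hp s) s).

Fixpoint push_exp (t : nat) (f : S -> seq (option S) -> R) : R :=
  match t with
  | 0 => \sum_(s : S) mu0 s * f s [::]
  | t'.+1 => push_exp t' (fun s hp =>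
       let o := push_obs hp s in
       \sum_(s' : S) P (dec o) s s' * f s' o)
  end.

Definition push_stage (t : nat) : R :=
  push_exp t (fun s hp =>
    let o := push_obs hp s in
    \sum_(s' : S) P (dec o) s s' * r s (dec o) s' - beta * (push_c hp s)%:R).

Definition J_push : R := limn (series (fun t => gamma ^+ t * push_stage t)).
End Push.

Definition r_hat (s : S) (ac : A * (S -> bool)) : R :=
  \sum_(s' : S) P ac.1 s s' * (r s ac.1 s' - gamma * beta * (ac.2 s')%:R).

(* A deterministic policy of \hat M maps the observation history o_{0:t}
   (o_0 produced by the time-0 encoder decision c0) to an action. *)
Section POMDP.
Variable (pol : seq (option S) -> A * (S -> bool)).

(* expectation at time t of g(s_t, o_{0:t}) *)
Fixpoint pomdp_exp (t : nat) (g : S -> seq (option S) -> R) : R :=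
  match t with
  | 0 => \sum_(s : S) mu0 s * g s [:: observe (c0 s) s]
  | t'.+1 => pomdp_exp t' (fun s os =>
       let ac := pol os in
       \sum_(s' : S) P ac.1 s s' * g s' (rcons os (observe (ac.2 s') s')))
  end.

Definition pomdp_stage (t : nat) : R :=
  pomdp_exp t (fun s os => r_hat s (pol os)).

Definition J_pomdp : R := limn (series (fun t => gamma ^+ t * pomdp_stage t)).
End POMDP.

Definition split_dec (pol : seq (option S) -> A * (S -> bool)) :
  seq (option S) -> A := fun os => (pol os).1.
Definition split_enc (pol : seq (option S) -> A * (S -> bool)) :
  seq (option S) -> S -> bool := fun hp s => (pol hp).2 s.
Definition join_pol (enc : seq (option S) -> S -> bool)
  (dec : seq (option S) -> A) : seq (option S) -> A * (S -> bool) :=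
  fun os => (dec os, enc os).

(* Beliefs (elements of Omega, represented as functions S -> R). *)
Definition belief0 (o : option S) : S -> R :=
  match o with
  | Some s0 => fun s => (s == s0)%:R
  | None => let w := fun s => mu0 s * (~~ c0 s)%:R in
            fun s => w s / \sum_(x : S) w x
  end.

Definition belief_update (om : S -> R) (ac : A * (S -> bool)) (o : option S)
  : S -> R :=
  match o with
  | Some s0 => fun s => (s == s0)%:R
  | None => let w := fun s' => (\sum_(s : S) om s * P ac.1 s s') * (~~ ac.2 s')%:R in
            fun s' => w s' / \sum_(x : S) w x
  end.

Fixpoint belief_run (pib : (S -> R) -> A * (S -> bool)) (om : S -> R)
  (os : seq (option S)) : S -> R :=
  match os with
  | [::] => om
  | o :: os' => belief_run pib (belief_update om (pib om) o) os'
  end.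

Definition belief_of (pib : (S -> R) -> A * (S -> bool)) (os : seq (option S))
  : S -> R :=
  match os with
  | [::] => mu0
  | o0 :: os' => belief_run pib (belief0 o0) os'
  end.

Definition belief_policy (pib : (S -> R) -> A * (S -> bool)) :
  seq (option S) -> A * (S -> bool) := fun os => pib (belief_of pib os).

End PushPOMDP.

(* Main.v *)
Require Import Defs.
From HB Require Import structures.
From mathcomp Require Import all_boot all_order all_algebra.
From mathcomp Require Import all_classical all_reals all_analysis.
From mathcomp Require Import ring lra.
Import Order.TTheory GRing.Theory Num.Theory.
Import numFieldNormedType.Exports.
Local Open Scope ring_scope.

Section H.
Local Open Scope classical_set_scope.
Variables (R : realType) (S A : finType).
Variables (P : A -> S -> S -> R) (r : S -> A -> S -> R) (gamma beta : R).
Variable (mu0 : S -> R).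
Variable (c0 : S -> bool).
Variables (enc : seq (option S) -> S -> bool) (dec : seq (option S) -> A).

Let pol := join_pol enc dec.

Lemma push_c_rcons hp x s : push_c c0 enc (rcons hp x) s = enc (rcons hp x) s.
Proof. by case: hp. Qed.

Lemma push_exp_lin t (f g : S -> seq (option S) -> R) a b :
  push_exp P mu0 c0 enc dec t (fun s hp => a * f s hp + b * g s hp) =
  a * push_exp P mu0 c0 enc dec t f + b * push_exp P mu0 c0 enc dec t g.
Proof.
elim: t f g => [|t IH] f g /=.
  rewrite !mulr_sumr -big_split /=; apply: eq_bigr => s _; ring.
rewrite -IH; congr push_exp; apply: funext => s; apply: funext => hp.
rewrite !mulr_sumr -big_split /=; apply: eq_bigr => s' _; ring.
Qed.

Lemma pomdp_exp_lin t (f g : S -> seq (option S) -> R) a b :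
  pomdp_exp P mu0 c0 pol t (fun s hp => a * f s hp + b * g s hp) =
  a * pomdp_exp P mu0 c0 pol t f + b * pomdp_exp P mu0 c0 pol t g.
Proof.
elim: t f g => [|t IH] f g /=.
  rewrite !mulr_sumr -big_split /=; apply: eq_bigr => s _; ring.
rewrite -IH; congr pomdp_exp; apply: funext => s; apply: funext => hp.
rewrite !mulr_sumr -big_split /=; apply: eq_bigr => s' _; ring.
Qed.

Lemma exp_eq t h :
  push_exp P mu0 c0 enc dec t (fun s hp => h s (push_obs c0 enc hp s)) =
  pomdp_exp P mu0 c0 pol t h.
Proof.
elim: t h => [|t IH] h //=.
rewrite -IH; congr push_exp; apply: funext => s; apply: funext => hp.
apply: eq_bigr => s' _; by rewrite /push_obs push_c_rcons.
Qed.

Hypothesis P_ge0 : forall a s s', 0 <= P a s s'.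
Hypothesis P_sum : forall a s, \sum_(s' : S) P a s s' = 1.
Hypothesis mu_ge0 : forall s, 0 <= mu0 s.
Hypothesis mu_sum : \sum_(s : S) mu0 s = 1.

Lemma sum_bound (w : S -> R) (f : S -> R) M :
  (forall s, 0 <= w s) -> \sum_s w s = 1 -> (forall s, `|f s| <= M) ->
  `|\sum_s w s * f s| <= M.
Proof.
move=> w0 w1 fM; apply: le_trans (ler_norm_sum _ _ _) _.
have -> : M = \sum_s w s * M by rewrite -mulr_suml w1 mul1r.
apply: ler_sum => s _; rewrite normrM ger0_norm //; exact: ler_wpM2l.
Qed.

Lemma push_exp_bound t f M : (forall s hp, `|f s hp| <= M) ->
  `|push_exp P mu0 c0 enc dec t f| <= M.
Proof.
elim: t f => [|t IH] f fM /=; first by apply: sum_bound.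
by apply: IH => s hp; apply: sum_bound.
Qed.

Lemma pomdp_exp_bound (pl : seq (option S) -> A * (S -> bool)) t f M :
  (forall s hp, `|f s hp| <= M) -> `|pomdp_exp P mu0 c0 pl t f| <= M.
Proof.
elim: t f => [|t IH] f fM /=; first by apply: sum_bound.
by apply: IH => s hp; apply: sum_bound.
Qed.

Let C t := push_exp P mu0 c0 enc dec t (fun s hp => (push_c c0 enc hp s)%:R).
Let X t := pomdp_exp P mu0 c0 pol t
  (fun s os => \sum_(s' : S) P (dec os) s s' * r s (dec os) s').

Lemma push_stage_eq t : push_stage P r beta mu0 c0 enc dec t = X t - beta * C t.
Proof.
rewrite /push_stage /X /C -exp_eq.
rewrite (_ : (fun s hp => _) = (fun s hp =>
   1 * (\sum_(s' : S) P (dec (push_obs c0 enc hp s)) s s' *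
          r s (dec (push_obs c0 enc hp s)) s') + (- beta) * (push_c c0 enc hp s)%:R)).
  by rewrite push_exp_lin mul1r mulNr.
by apply: funext => s; apply: funext => hp /=; rewrite mul1r mulNr.
Qed.

Lemma pomdp_stage_eq t :
  pomdp_stage P r gamma beta mu0 c0 pol t = X t - gamma * beta * C t.+1.
Proof.
pose Q := fun s os => \sum_(s' : S) P (dec os) s s' * (enc os s')%:R.
have -> : C t.+1 = pomdp_exp P mu0 c0 pol t Q.
  rewrite /C /= -exp_eq; congr push_exp; apply: funext => s; apply: funext => hp.
  by apply: eq_bigr => s' _; rewrite /push_obs push_c_rcons.
rewrite /pomdp_stage /X.
rewrite (_ : (fun s os => _) = (fun s os =>
   1 * (\sum_(s' : S) P (dec os) s s' * r s (dec os) s') + (- (gamma * beta)) * Q s os)).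
  by rewrite pomdp_exp_lin mul1r mulNr.
apply: funext => s; apply: funext => os; rewrite /r_hat /Q /= mul1r mulr_sumr -big_split /=.
apply: eq_bigr => sx _; ring.
Qed.

Lemma series_rel N :
  series (fun t => gamma ^+ t * push_stage P r beta mu0 c0 enc dec t) N =
  series (fun t => gamma ^+ t * pomdp_stage P r gamma beta mu0 c0 pol t) N
  + beta * (gamma ^+ N * C N - C 0).
Proof.
elim: N => [|N IH]; first by rewrite /series /= !big_geq // expr0 mul1r subrr mulr0 addr0.
rewrite !seriesSr IH push_stage_eq pomdp_stage_eq exprS; ring.
Qed.

Lemma C_bound t : `|C t| <= 1.
Proof. by apply: push_exp_bound => s hp; case: (push_c _ _ _ _); rewrite ?normr1 ?normr0. Qed.

Hypothesis g0 : 0 <= gamma.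
Hypothesis g1 : gamma < 1.

Let M := \sum_s \sum_a \sum_s' `|r s a s'| + `|gamma * beta|.

Lemma r_bound s a s' : `|r s a s'| <= \sum_s \sum_a \sum_s' `|r s a s'|.
Proof.
have h1 : `|r s a s'| <= \sum_s' `|r s a s'|.
  by rewrite (bigD1 s') //= lerDl sumr_ge0.
have h2 : \sum_s' `|r s a s'| <= \sum_a \sum_s' `|r s a s'|.
  by rewrite (bigD1 a) //= lerDl sumr_ge0 // => *; rewrite sumr_ge0.
have h3 : \sum_a \sum_s' `|r s a s'| <= \sum_s \sum_a \sum_s' `|r s a s'|.
  by rewrite (bigD1 s) //= lerDl sumr_ge0 // => *; rewrite sumr_ge0 // => *; rewrite sumr_ge0.
exact: le_trans h1 (le_trans h2 h3).
Qed.

Lemma rhat_bound s ac : `|r_hat P r gamma beta s ac| <= M.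
Proof.
apply: sum_bound => // s'.
apply: le_trans (ler_normB _ _) _; apply: lerD; first exact: r_bound.
by rewrite normrM; case: (ac.2 s'); rewrite ?normr1 ?mulr1 ?normr0 ?mulr0.
Qed.

Lemma v_cvg pl :
  cvgn (series (fun t => gamma ^+ t * pomdp_stage P r gamma beta mu0 c0 pl t)).
Proof.
apply: normed_cvg.
apply: (@series_le_cvg _ _ (geometric M gamma)).
- by move=> n /=; exact: normr_ge0.
- move=> n; apply: geometric_ge0 => //.
  by rewrite /M addr_ge0 // !sumr_ge0 // => *; rewrite sumr_ge0 // => *; rewrite sumr_ge0.
- move=> n /=; rewrite normrM normrX ger0_norm // mulrC; apply: ler_wpM2r.
    exact: exprn_ge0.
  by apply: pomdp_exp_bound => s os; apply: rhat_bound.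
- by apply: is_cvg_geometric_series; rewrite ger0_norm.
Qed.

Lemma w_cvg : gamma ^+ N * C N @[N --> \oo] --> 0.
Proof.
have hg : (fun N => 1 * gamma ^+ N) @ \oo --> (0:R).
  have := @cvg_expr R gamma; rewrite ger0_norm // => /(_ g1) h.
  by rewrite -[X in _ --> X](mulr0 1); apply: cvgMl_tmp.
apply: (@squeeze_cvgr _ _ _ _ (fun N => - (1 * gamma ^+ N)) (fun N => 1 * gamma ^+ N)).
- near=> N; have := C_bound N; rewrite ler_norml => /andP[h1 h2].
  have gN : 0 <= gamma ^+ N by exact: exprn_ge0.
  rewrite mul1r; apply/andP; split; nra.
- rewrite -oppr0; apply: cvgN; exact: hg.
- exact: hg.
Unshelve. all: by end_near.
Qed.

Lemma J_eq : J_push P r gamma beta mu0 c0 enc dec =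
  J_pomdp P r gamma beta mu0 c0 pol - beta * C 0.
Proof.
rewrite /J_push /J_pomdp (funext series_rel); apply: cvg_lim => //.
have -> : forall x : R, x - beta * C 0 = x + beta * (0 - C 0).
  by move=> x; rewrite sub0r mulrN.
apply: cvgD; first exact: v_cvg.
apply: cvgMl_tmp; apply: cvgB => //; [exact: w_cvg | exact: cvg_cst].
Qed.
End H.

Theorem theorem3 (R : realType) (S A : finType)
  (P : A -> S -> S -> R) (r : S -> A -> S -> R) (gamma beta : R)
  (mu0 : S -> R) (c0 : S -> bool) :
  (forall a s s', 0 <= P a s s') ->
  (forall a s, \sum_(s' : S) P a s s' = 1) ->
  (forall s, 0 <= mu0 s) -> \sum_(s : S) mu0 s = 1 ->
  0 <= gamma -> gamma < 1 -> 0 < beta ->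
  let cost0 := beta * \sum_(s : S) mu0 s * (c0 s)%:R in
  (* encoder/decoder pairs -> POMDP policies, same objective *)
  (forall (enc : seq (option S) -> S -> bool) (dec : seq (option S) -> A),
     J_push P r gamma beta mu0 c0 enc dec
     = J_pomdp P r gamma beta mu0 c0 (join_pol enc dec) - cost0) /\
  (* POMDP policies -> encoder/decoder pairs (by splitting), same objective *)
  (forall pol : seq (option S) -> A * (S -> bool),
     J_push P r gamma beta mu0 c0 (split_enc pol) (split_dec pol)
     = J_pomdp P r gamma beta mu0 c0 pol - cost0) /\
  (* an optimal policy of \hat M splits into optimal push-based policies *)
  (forall pol_star : seq (option S) -> A * (S -> bool),
     (forall pol, J_pomdp P r gamma beta mu0 c0 pol
                  <= J_pomdp P r gamma beta mu0 c0 pol_star) ->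
     forall enc dec,
       J_push P r gamma beta mu0 c0 enc dec
       <= J_push P r gamma beta mu0 c0 (split_enc pol_star) (split_dec pol_star)) /\
  (* in particular for an optimal belief-based policy pi : Omega -> \hat A *)
  (forall pib : (S -> R) -> A * (S -> bool),
     (forall pol, J_pomdp P r gamma beta mu0 c0 pol
       <= J_pomdp P r gamma beta mu0 c0 (belief_policy P mu0 c0 pib)) ->
     forall enc dec,
       J_push P r gamma beta mu0 c0 enc dec
       <= J_push P r gamma beta mu0 c0
            (split_enc (belief_policy P mu0 c0 pib))
            (split_dec (belief_policy P mu0 c0 pib))).

Proof.
move=> P0 P1 m0 m1 g0 g1 b0 cost0.
have part1 : forall enc dec, J_push P r gamma beta mu0 c0 enc dec
     = J_pomdp P r gamma beta mu0 c0 (join_pol enc dec) - cost0.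
  by move=> enc dec; apply: J_eq.
have part2 : forall pol, J_push P r gamma beta mu0 c0 (split_enc pol) (split_dec pol)
     = J_pomdp P r gamma beta mu0 c0 pol - cost0.
  move=> pol; rewrite part1.
  have -> : join_pol (split_enc pol) (split_dec pol) = pol.
    by apply: funext => os; rewrite /join_pol /split_enc /split_dec; case: (pol os).
  by [].
have part3 : forall pol_star,
     (forall pol, J_pomdp P r gamma beta mu0 c0 pol
                  <= J_pomdp P r gamma beta mu0 c0 pol_star) ->
     forall enc dec,
       J_push P r gamma beta mu0 c0 enc dec
       <= J_push P r gamma beta mu0 c0 (split_enc pol_star) (split_dec pol_star).
  by move=> ps H enc dec; rewrite part1 part2 lerD2r.
split; first exact: part1.
split; first exact: part2.
split; first exact: part3.
by move=> pib H; apply: part3.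
Qed.
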